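(* Let $M\in\mathrm{SL}(2,\mathbb Z)$ be a hyperbolic matrix, $N\in\mathbb N$, and $\{\phi_j\}_{j=1}^N$ an eigenbasis of $\hat M$ in $\mathcal H_N$ (setting in the context). Let $1\le p<\infty$, $L>0$, and let $D=D(r)$ satisfy $1/D=o(r)$ as $r\to0$; let $b^\pm_{q,r}$ be the majorant/minorant trigonometric polynomials of the arcs $B_1(q,r)\subset\mathbb T^1$ described in the context. Define $$\mathcal S^\pm(N,L):=\Big\{1\le j\le N:\ \sup_{q\in\mathbb T^1}\Big|\frac{\langle\mathrm{Op}_N(b^\pm_{q,r})\phi_j,\phi_j\rangle}{\mu(b^\pm_{q,r})}-1\Big|\ge L\Big\}.$$ Then $$\frac{\#\mathcal S^\pm(N,L)}{N}\le\frac{c\,D^{p-1}}{L^p}\sum_{m\in\mathbb Z,\,1\le|m|\le D}V_p\big(N,\hat T_N(m,0)\big),$$ where $c$ depends on $p$.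
   Context: $M=\exp\begin{pmatrix}\gamma&\beta\\-\alpha&-\gamma\end{pmatrix}\in\mathrm{SL}(2,\mathbb Z)$, $\gamma^2>\alpha\beta$. With $h=1/N$: $\hat q\psi=q\psi$, $\hat p\psi=\frac{h}{2\pi i}\psi'$, $\hat T_v=\exp(-\frac{2\pi i}{h}(v_1\hat p-v_2\hat q))$, $\hat H=\frac12\alpha\hat q^2+\frac12\beta\hat p^2+\frac\gamma2(\hat q\hat p+\hat p\hat q)$, $\hat M=e^{-2\pi i\hat H/h}$ acting on the $N$-dimensional Hilbert space $\mathcal H_N$ of distributions $\psi(q)=\sum_{k\in\mathbb Z}\Psi(k)\delta(q-(k+\kappa_1)/N)$, $\Psi(k+N)=e^{-2\pi i\kappa_2}\Psi(k)$ (fixed $\kappa\in\mathbb T^2$ chosen so that $\hat M$ preserves $\mathcal H_N$), inner product $\frac1N\sum_{k=1}^N\Psi(k)\overline{\Phi(k)}$; an eigenbasis is an orthonormal basis of eigenvectors of $\hat M$. $\hat T_N(n):=\hat T_{n/N}$ for $n\in\mathbb Z^2$. A function $a(q)=\sum_{m\in\mathbb Z}\tilde a(m)e^{2\pi imq}$ on $\mathbb T^1$ is quantized as $\mathrm{Op}_N(a)=\sum_m\tilde a(m)\hat T_N(m,0)$, and $\mu(a)=\int_{\mathbb T^1}a=\tilde a(0)$. For $m\ne0$, $V_p(N,\hat T_N(m,0)):=\frac1N\sum_{j=1}^N|\langle\hat T_N(m,0)\phi_j,\phi_j\rangle|^p$. Majorants/minorants: with $rD\ge1$, $a_r^\pm$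 are trigonometric polynomials on $\mathbb T^1$ with $a_r^-\le\chi_{B_1(0,r)}\le a_r^+$, $\widetilde{a_r^\pm}(m)=0$ for $|m|\ge D$, $\widetilde{a_r^\pm}(0)=\mathrm{Vol}(B_1(0,r))+O(1/D)$, $|\widetilde{a_r^\pm}(m)|\le c_0r$ for all $m$ with an absolute constant $c_0$; $b^\pm_{q,r}(y):=a_r^\pm(y-q)$. *)

(* Defs.v *)
From HB Require Import structures.
From mathcomp Require Import all_boot all_order all_algebra.
From mathcomp Require Import all_classical all_reals all_analysis.
From mathcomp Require Import complex.

Set Implicit Arguments.
Unset Strict Implicit.
Unset Printing Implicit Defensive.

Import Order.TTheory GRing.Theory Num.Theory.
Local Open Scope ring_scope.

Section Defs.
Variable R : realType.
Local Notation C := R[i].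

Definition expi (t : R) : C := Complex (cos t) (sin t).

Definition cabs (z : C) : R := Num.sqrt (complex.Re z ^+ 2 + complex.Im z ^+ 2).

Definition cconj (z : C) : C := Complex (complex.Re z) (- complex.Im z).

Definition zsum (K : nat) (f : int -> C) : C :=
  \sum_(i < (2 * K).+1) f (i%:Z - K%:Z).

(* A trigonometric polynomial on T^1 is given by its Fourier coefficients
   at : int -> C, supported in |m| <= K; its value at y is
   \sum_m at(m) e^{2 pi i m y}. *)
Definition trig_eval (K : nat) (at_ : int -> C) (y : R) : C :=
  zsum K (fun m => at_ m * expi (2 * pi * m%:~R * y)).

(* Fourier coefficients of the translate y |-> a(y - q):  ã(m) e^{-2 pi i m q} *)
Definition transl_coef (at_ : int -> C) (q : R) : int -> C :=
  fun m => at_ m * expi (- (2 * pi * m%:~R * q)).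

(* Indicator of the closed arc B_1(0,r) = {y in T^1 : dist(y, Z) <= r}. *)
Definition arc_ind (r y : R) : R :=
  if `[< exists k : int, `|y - k%:~R| <= r >] then 1 else 0.

(* Vol(B_1(0,r)) (Lebesgue measure on T^1 = R/Z, total mass 1) *)
Definition arc_vol (r : R) : R := Num.min (2 * r) 1.

(* Elements of H_N are represented by their coefficient sequence
   Psi : int -> C, psi(q) = \sum_k Psi(k) delta(q - (k+kappa1)/N),
   subject to Psi(k+N) = e^{-2 pi i kappa2} Psi(k). *)
Definition in_HN (N : nat) (kappa2 : R) (Psi : int -> C) : Prop :=
  forall k : int, Psi (k + N%:Z) = expi (- (2 * pi * kappa2)) * Psi k.

Definition ipN (N : nat) (Psi Phi : int -> C) : C :=
  (N%:R)^-1 * \sum_(k < N) Psi (k.+1%:Z) * cconj (Phi (k.+1%:Z)).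

(* T_N(m,0) = T_{(m/N,0)} = exp(-2 pi i m \hat p) = exp(-(m/N) d/dq):
   translation psi(q) |-> psi(q - m/N), i.e. Psi(k) |-> Psi(k - m). *)
Definition TN (m : int) (Psi : int -> C) : int -> C := fun k => Psi (k - m).

Definition OpN (K : nat) (at_ : int -> C) (Psi : int -> C) : int -> C :=
  fun k => zsum K (fun m => at_ m * TN m Psi k).

(* orthonormal basis {phi_j}_{j=1}^N of H_N (N orthonormal vectors in the
   N-dimensional space H_N) *)
Definition onb_HN (N : nat) (kappa2 : R) (phi : 'I_N -> int -> C) : Prop :=
  (forall j, in_HN N kappa2 (phi j)) /\
  (forall i j, ipN N (phi i) (phi j) = (i == j)%:R).

Definition Vp (N : nat) (phi : 'I_N -> int -> C) (p : R) (m : int) : R :=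
  (N%:R)^-1 * \sum_(j < N) (cabs (ipN N (TN m (phi j)) (phi j))) `^ p.

Definition D_hyp (D : R -> R) : Prop :=
  forall eps : R, 0 < eps -> exists delta : R, 0 < delta /\
    forall r : R, 0 < r < delta -> 0 < D r /\ (D r)^-1 <= eps * r.

(* a : R -> int -> C is a family (indexed by r) of majorants (sgn = true)
   or minorants (sgn = false) of the arc B_1(0,r), with the properties of
   the context, valid whenever r D(r) >= 1; c0 is the absolute constant and
   C1 the implied constant in O(1/D). *)
Definition arc_approx (D : R -> R) (c0 C1 : R) (sgn : bool)
    (a : R -> int -> C) : Prop :=
  forall r : R, 0 < r -> 1 <= r * D r ->
    [/\ (forall m : int, D r <= `|m|%:~R -> a r m = 0),
        (forall y : R, complex.Im (trig_eval (Num.truncn (D r)) (a r) y) = 0 /\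
           (if sgn then arc_ind r y <= complex.Re (trig_eval (Num.truncn (D r)) (a r) y)
            else complex.Re (trig_eval (Num.truncn (D r)) (a r) y) <= arc_ind r y)),
        cabs (a r 0 - Complex (arc_vol r) 0) <= C1 / D r
      & (forall m : int, cabs (a r m) <= c0 * r)].

(* | <Op_N(b_{q,r}) phi_j, phi_j> / mu(b_{q,r}) - 1 |, with b_{q,r}(y) = a_r(y - q)
   and mu(b_{q,r}) = b~_{q,r}(0) *)
Definition dev (N : nat) (phi : 'I_N -> int -> C) (K : nat)
    (at_ : int -> C) (j : 'I_N) (q : R) : R :=
  cabs (ipN N (OpN K (transl_coef at_ q) (phi j)) (phi j)
          / transl_coef at_ q 0 - 1).

Definition Sexc (N : nat) (phi : 'I_N -> int -> C) (K : nat)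
    (at_ : int -> C) (L : R) : {set 'I_N} :=
  [set j : 'I_N | `[< (L%:E <= ereal_sup (range (fun q : R => (dev phi K at_ j q)%:E)))%E >]].

Definition sumVp (N : nat) (phi : 'I_N -> int -> C) (p D : R) : R :=
  \sum_(1 <= n < (Num.truncn D).+1) (Vp phi p n%:Z + Vp phi p (- n%:Z)).

End Defs.

(* Main.v *)
Require Import Defs.
From HB Require Import structures.
From mathcomp Require Import all_boot all_order all_algebra.
From mathcomp Require Import all_classical all_reals all_analysis.
From mathcomp Require Import complex.
From mathcomp Require Import ring lra zify.
Set Implicit Arguments.
Unset Strict Implicit.
Import Order.TTheory GRing.Theory Num.Theory.
Local Open Scope ring_scope.
Lemma conv2 (R : realType) (p t a b : R) : 1 <= p -> 0 <= t -> t <= 1 -> 0 <= a -> 0 <= b ->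
  (t * a + (1 - t) * b) `^ p <= t * a `^ p + (1 - t) * b `^ p.
Proof.
move=> p1 t0 t1 a0 b0.
have := @convex_powR R p p1 (Itv01 t0 t1) a b.
rewrite !inE /= !in_itv /= !andbT => /(_ a0 b0).
by rewrite !convRE.
Qed.

Lemma jensen_aux (R : realType) (p : R) (I : Type) (s : seq I) (F : I -> R) :
  1 <= p -> (forall i, 0 <= F i) ->
  (size s)%:R * ((\sum_(i <- s) F i) / (size s)%:R) `^ p <= \sum_(i <- s) F i `^ p.
Proof.
move=> p1 F0; elim: s => [|y s IH]; first by rewrite big_nil mul0r big_nil.
rewrite /= !big_cons.
set n := size s in IH *.
have [n0|npos] := eqVneq n 0%N.
  have -> : s = [::] by apply/size0nil.
  by rewrite !big_nil !addr0 /= n0 mul1r divr1.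
have nR : 0 < (n%:R : R) by rewrite ltr0n lt0n.
set S := \sum_(i <- s) F i.
have S0 : 0 <= S by rewrite /S sumr_ge0.
set t : R := n%:R / n.+1%:R.
have n1R : 0 < (n.+1%:R : R) by rewrite ltr0n.
have t0 : 0 <= t by rewrite divr_ge0 // ltW.
have t1 : t <= 1 by rewrite ler_pdivrMr // mul1r ler_nat.
have E : (F y + S) / n.+1%:R = t * (S / n%:R) + (1 - t) * F y.
  rewrite /t; field.
  have h1 : 0 < 1 + (n%:R:R) by lra.
  by rewrite !gt_eqF.
rewrite E.
have H := ler_wpM2l (ltW n1R) (@conv2 _ _ _ _ _ p1 t0 t1 (divr_ge0 S0 (ltW nR)) (F0 y)).
apply: le_trans H _.
have -> : n.+1%:R * (t * (S / n%:R) `^ p + (1 - t) * F y `^ p) =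
  n%:R * (S / n%:R) `^ p + F y `^ p.
  rewrite /t; field.
  have h1 : 0 < 1 + (n%:R:R) by lra.
  by rewrite !gt_eqF.
rewrite addrC lerD2l; exact: IH.
Qed.

Lemma jensen (R : realType) (p : R) (I : Type) (s : seq I) (F : I -> R) :
  1 <= p -> (forall i, 0 <= F i) ->
  (\sum_(i <- s) F i) `^ p <= (size s)%:R `^ (p - 1) * \sum_(i <- s) F i `^ p.
Proof.
move=> p1 F0.
have p0 : p != 0 by apply/negP => /eqP p0; move: p1; rewrite p0; lra.
have [->|sn] : s = [::] \/ (0 < size s)%N by case: s => [|? ?]; [left|right].
  by rewrite !big_nil powR0 // mulr0.
set n := size s.
have nR : 0 < (n%:R : R) by rewrite ltr0n.
set S := \sum_(i <- s) F i.
have S0 : 0 <= S by rewrite /S sumr_ge0.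
have -> : S = n%:R * (S / n%:R) by field; rewrite gt_eqF.
rewrite powRM ?(ltW nR) ?divr_ge0 ?(ltW nR) //.
have -> : (n%:R : R) `^ p = n%:R `^ (p - 1) * n%:R.
  have -> : (n%:R:R) `^ p = n%:R `^ (p - 1 + 1) by rewrite subrK.
  by rewrite powRD ?powRr1 ?(ltW nR) // (gt_eqF nR) implybT.
rewrite -mulrA ler_wpM2l ?powR_ge0 //.
have := @jensen_aux R p I s F p1 F0; rewrite -/n -/S.
done.
Qed.
Section C.
Local Open Scope complex_scope.
Local Open Scope ring_scope.
Variable R : realType.
Local Notation C := R[i].

Lemma cabsC (z : C) : (cabs z)%:C = `|z|.
Proof. by rewrite normc_def. Qed.

Lemma cabs_ge0 (z : C) : 0 <= cabs z.
Proof. by rewrite -lecR cabsC normr_ge0. Qed.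

Lemma cabsM (x y : C) : cabs (x * y) = cabs x * cabs y.
Proof. by apply: complexI; rewrite rmorphM /= !cabsC normrM. Qed.

Lemma cabsV (x : C) : cabs (x^-1) = (cabs x)^-1.
Proof. by apply: complexI; rewrite fmorphV /= !cabsC normfV. Qed.

Lemma cabsD (x y : C) : cabs (x + y) <= cabs x + cabs y.
Proof. by rewrite -lecR rmorphD /= !cabsC ler_normD. Qed.

Lemma cabsB (x y : C) : cabs x - cabs y <= cabs (x - y).
Proof. by rewrite -lecR rmorphB /= !cabsC lerB_dist. Qed.

Lemma cabs_sum (I : Type) (s : seq I) (F : I -> C) :
  cabs (\sum_(i <- s) F i) <= \sum_(i <- s) cabs (F i).
Proof.
rewrite -lecR rmorph_sum /= cabsC.
under [X in _ <= X]eq_bigr do rewrite cabsC.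
exact: ler_norm_sum.
Qed.

Lemma cabs_expi (t : R) : cabs (expi t) = 1.
Proof. by rewrite /cabs /expi /= cos2Dsin2 sqrtr1. Qed.

Lemma cabs_real (x : R) : cabs (Complex x 0) = `|x|.
Proof. by rewrite /cabs /= expr0n /= addr0 sqrtr_sqr. Qed.

End C.
Section Z1.
Variable R : realType.
Local Notation C := R[i].

Lemma zsum_split (K : nat) (f : int -> C) :
  zsum K f = f 0 + \sum_(1 <= n < K.+1) (f n%:Z + f (- n%:Z)).
Proof.
elim: K => [|K IH].
  by rewrite /zsum big_ord_recr big_ord0 /= add0r big_geq // muln0 subr0 addr0.
rewrite (@big_nat_recr _ _ _ K.+1 1) //= addrA -IH /zsum.
rewrite -(big_mkord xpredT (fun i : nat => f (i%:Z - K.+1%:Z))).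
rewrite -(big_mkord xpredT (fun i : nat => f (i%:Z - K%:Z))).
have -> : (2 * K.+1).+1 = ((2 * K).+1).+2 by lia.
rewrite big_nat_recl // big_nat_recr //=.
rewrite addrCA; congr (_ + _).
  apply: eq_bigr => i _; congr (f _); lia.
rewrite addrC; congr (f _ + f _); lia.
Qed.
End Z1.
Section Z.
Variable R : realType.
Local Notation C := R[i].
Lemma ipN_OpN (N K : nat) (b : int -> C) (Psi Phi : int -> C) :
  ipN N (OpN K b Psi) Phi = zsum K (fun m => b m * ipN N (TN m Psi) Phi).
Proof.
rewrite /ipN /OpN /zsum.
under [RHS]eq_bigr do rewrite mulrCA big_distrr /=.
rewrite -big_distrr /=; congr (_ * _).
rewrite exchange_big /=; apply: eq_bigr => k _.
by rewrite big_distrl /=; apply: eq_bigr => i _; rewrite mulrA.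
Qed.
End Z.

Section Core.
Variable R : realType.
Local Notation C := R[i].

Definition yv (N : nat) (phi : 'I_N -> int -> C) (j : 'I_N) (m : int) : C :=
  ipN N (TN m (phi j)) (phi j).

Definition Xv (N : nat) (phi : 'I_N -> int -> C) (K : nat) (j : 'I_N) : R :=
  \sum_(1 <= n < K.+1) (cabs (yv phi j n%:Z) + cabs (yv phi j (- n%:Z))).

Lemma expi0 : expi (0 : R) = 1.
Proof. by rewrite /expi cos0 sin0. Qed.

Lemma dev_bound (N : nat) (kappa2 : R) (phi : 'I_N -> int -> C) (K : nat)
  (a : int -> C) (j : 'I_N) (q r c0 : R) :
  onb_HN kappa2 phi -> 0 < r -> 0 < c0 ->
  (forall m, cabs (a m) <= c0 * r) -> r <= cabs (a 0) ->
  dev phi K a j q <= c0 * Xv phi K j.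
Proof.
move=> [_ onb] r0 c00 ha ha0.
rewrite /dev ipN_OpN zsum_split.
have b0E : transl_coef a q 0 = a 0.
  by rewrite /transl_coef mulr0 mul0r oppr0 expi0 mulr1.
have y0 : ipN N (TN 0 (phi j)) (phi j) = 1.
  have -> : TN 0 (phi j) = phi j by apply: funext => k; rewrite /TN subr0.
  by rewrite onb eqxx.
rewrite b0E y0 mulr1.
have a0ne : a 0 != 0.
  apply/negP => /eqP h; move: ha0; rewrite h.
  have -> : cabs (0 : C) = 0 by rewrite /cabs /= expr0n /= addr0 sqrtr0.
  by rewrite leNgt r0.
set S := \sum_(_ <= _ < _) _.
have -> : (a 0 + S) / a 0 - 1 = S / a 0 by field.
rewrite cabsM cabsV.
have cb : forall m, cabs (transl_coef a q m) <= c0 * r.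
  by move=> m; rewrite /transl_coef cabsM cabs_expi mulr1.
have hS : cabs S <= c0 * r * Xv phi K j.
  rewrite /S /Xv big_distrr /=.
  apply: (le_trans (cabs_sum _ _)); apply: ler_sum => n _.
  apply: (le_trans (cabsD _ _)); rewrite mulrDr (cabsM (transl_coef _ _ _)) (cabsM (transl_coef _ _ _)).
  by apply: lerD; apply: ler_wpM2r; rewrite ?cabs_ge0 ?cb.
have a0pos : 0 < cabs (a 0) by apply: lt_le_trans ha0.
rewrite ler_pdivrMr //.
apply: (le_trans hS).
have X0 : 0 <= Xv phi K j.
  by rewrite /Xv sumr_ge0 // => n _; rewrite addr_ge0 ?cabs_ge0.
rewrite mulrAC [c0 * _ * _]mulrC.
by rewrite mulrC; apply: ler_wpM2l; rewrite // mulr_ge0 // ltW.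
Qed.
End Core.

Section Count.
Variable R : realType.
Local Notation C := R[i].

Lemma pow2 (p x y : R) : 1 <= p -> 0 <= x -> 0 <= y ->
  (x + y) `^ p <= 2 `^ (p - 1) * (x `^ p + y `^ p).
Proof.
move=> p1 x0 y0.
have := @jensen R p bool [:: true; false] (fun b => if b then x else y) p1.
rewrite !big_cons !big_nil !addr0 /=; apply.
by case.
Qed.

Lemma count_bound (N : nat) (kappa2 : R) (phi : 'I_N -> int -> C)
  (a : int -> C) (L r c0 p Dr : R) :
  1 <= p -> onb_HN kappa2 phi -> 0 < r -> 0 < c0 -> 0 < L -> (0 < N)%N ->
  (forall m, cabs (a m) <= c0 * r) -> r <= cabs (a 0) -> 0 <= Dr ->
  #|Sexc phi (Num.truncn Dr) a L|%:R / N%:R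
    <= (c0 `^ p * 2 `^ (p - 1)) * Dr `^ (p - 1) / L `^ p * sumVp phi p Dr.
Proof.
move=> p1 onb r0 c00 L0 N0 ha ha0 D0.
set K := Num.truncn Dr.
set S := Sexc phi K a L.
have p0 : 0 <= p by apply: le_trans p1.
have pm1 : 0 <= p - 1 by rewrite subr_ge0.
have NR : 0 < (N%:R : R) by rewrite ltr0n.
have Lp : 0 < L `^ p by apply: powR_gt0.
have X0 : forall j, 0 <= Xv phi K j.
  by move=> j; rewrite /Xv sumr_ge0 // => n _; rewrite addr_ge0 ?cabs_ge0.
have memS : forall j, j \in S -> L <= c0 * Xv phi K j.
  move=> j; rewrite inE => /asboolP H.
  rewrite -lee_fin; apply: (le_trans H); apply: ge_ereal_sup => _ [q _ <-].
  by rewrite lee_fin (@dev_bound _ _ _ _ _ _ _ _ _ _ onb r0 c00 ha ha0).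
have step1 : #|S|%:R * L `^ p <= \sum_j (c0 * Xv phi K j) `^ p.
  have -> : #|S|%:R * L `^ p = \sum_(j in S) L `^ p by rewrite sumr_const mulr_natl.
  rewrite big_mkcond /=.
  apply: ler_sum => j _; case: ifP => jS; last by rewrite powR_ge0.
  by apply: ge0_ler_powR; rewrite ?nnegrE ?(ltW L0) ?mulr_ge0 ?(ltW c00) ?memS.
have step2 : forall j, (c0 * Xv phi K j) `^ p <=
    c0 `^ p * ((K%:R) `^ (p - 1) * (2 `^ (p - 1) *
      \sum_(1 <= n < K.+1) (cabs (yv phi j n%:Z) `^ p + cabs (yv phi j (- n%:Z)) `^ p))).
  move=> j; rewrite powRM ?(ltW c00) //; apply: ler_wpM2l; first exact: powR_ge0.
  apply: (le_trans (jensen _ p1 _)); first by move=> n; rewrite addr_ge0 ?cabs_ge0.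
  rewrite size_iota subSS subn0; apply: ler_wpM2l; first exact: powR_ge0.
  rewrite big_distrr /=; apply: ler_sum => n _.
  by apply: pow2; rewrite ?cabs_ge0.
have step3 : \sum_j \sum_(1 <= n < K.+1)
    (cabs (yv phi j n%:Z) `^ p + cabs (yv phi j (- n%:Z)) `^ p)
    = N%:R * sumVp phi p Dr.
  rewrite exchange_big /sumVp big_distrr /=; apply: eq_bigr => n _.
  rewrite /Vp mulrDr !mulrA mulfV ?gt_eqF // !mul1r -big_split /=.
  by [].
have sV0 : 0 <= sumVp phi p Dr.
  rewrite /sumVp sumr_ge0 // => n _.
  by rewrite addr_ge0 // /Vp mulr_ge0 ?invr_ge0 ?ler0n // sumr_ge0 // => i _; rewrite powR_ge0.
have KD : (K%:R : R) `^ (p - 1) <= Dr `^ (p - 1).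
  by apply: ge0_ler_powR; rewrite ?nnegrE ?ler0n ?truncn_le.
have key : #|S|%:R * L `^ p <=
    c0 `^ p * 2 `^ (p - 1) * Dr `^ (p - 1) * N%:R * sumVp phi p Dr.
  apply: (le_trans step1); apply: (le_trans (ler_sum _ (fun j _ => step2 j))).
  rewrite -big_distrr -big_distrr -big_distrr /= step3.
  have -> : c0 `^ p * (K%:R `^ (p - 1) * (2 `^ (p - 1) * (N%:R * sumVp phi p Dr)))
    = c0 `^ p * 2 `^ (p - 1) * N%:R * sumVp phi p Dr * K%:R `^ (p - 1) by ring.
  have -> : c0 `^ p * 2 `^ (p - 1) * Dr `^ (p - 1) * N%:R * sumVp phi p Dr
    = c0 `^ p * 2 `^ (p - 1) * N%:R * sumVp phi p Dr * Dr `^ (p - 1) by ring.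
  by apply: ler_wpM2l => //; rewrite !mulr_ge0 ?powR_ge0 ?ler0n.
have -> : c0 `^ p * 2 `^ (p - 1) * Dr `^ (p - 1) / L `^ p * sumVp phi p Dr
   = (c0 `^ p * 2 `^ (p - 1) * Dr `^ (p - 1) * N%:R * sumVp phi p Dr) / L `^ p / N%:R.
  by field; rewrite !gt_eqF.
rewrite ler_pdivrMr // divfK ?gt_eqF // ler_pdivlMr //.
Qed.
End Count.

Lemma cabsN (R : realType) (x : R[i]) : cabs (- x) = cabs x.
Proof. by apply: complexI; rewrite !cabsC normrN. Qed.

Lemma use_approx (R : realType) (D : R -> R) (c0 C1 : R) (sgn : bool)
  (a : R -> int -> R[i]) (r : R) :
  arc_approx D c0 C1 sgn a -> 0 < r -> 1 <= r * D r -> C1 / D r <= r -> r < 1/2 ->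
  (forall m, cabs (a r m) <= c0 * r) /\ r <= cabs (a r 0).
Proof.
move=> h r0 rD C1D rh.
have [_ _ h0 hm] := h r r0 rD.
split => //.
have vol : arc_vol r = 2 * r by rewrite /arc_vol min_l //; lra.
move: h0; rewrite vol => h0.
have := cabsB (Complex (2 * r) 0) (a r 0).
rewrite cabs_real -(cabsN (Complex _ _ - _)) opprB.
have : `|2 * r| = 2 * r by rewrite ger0_norm //; lra.
move=> -> H; lra.
Qed.

Unset Implicit Arguments.
Set Strict Implicit.

Theorem lemma3p5 (R : realType) (p c0 : R) :
  1 <= p -> 0 < c0 ->
  exists c : R, 0 < c /\
  forall (C1 : R) (D : R -> R) (ap am : R -> int -> R[i]),
    D_hyp D ->
    arc_approx D c0 C1 true ap ->
    arc_approx D c0 C1 false am ->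
    exists r0 : R, 0 < r0 /\
    forall r : R, 0 < r < r0 ->
    forall (N : nat) (kappa : R * R) (phi : 'I_N -> int -> R[i]) (L : R),
      (0 < N)%N -> onb_HN kappa.2 phi -> 0 < L ->
      (#|Sexc phi (Num.truncn (D r)) (ap r) L|%:R / N%:R
         <= c * (D r) `^ (p - 1) / L `^ p * sumVp phi p (D r))
      /\
      (#|Sexc phi (Num.truncn (D r)) (am r) L|%:R / N%:R
         <= c * (D r) `^ (p - 1) / L `^ p * sumVp phi p (D r)).
Proof.
move=> p1 c00.
exists (c0 `^ p * 2 `^ (p - 1)); split; first by rewrite mulr_gt0 ?powR_gt0.
move=> C1 D ap am hD hap ham.
have C1p : 0 < `|C1| + 1 by rewrite ltr_wpDl.
have eps0 : 0 < (`|C1| + 1)^-1 by rewrite invr_gt0.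
have [delta [d0 hd]] := hD _ eps0.
exists (Num.min delta (1/2)); split; first by rewrite lt_min d0 /=; lra.
move=> r /andP [r0 rlt] N kappa phi L N0 onb L0.
move: rlt; rewrite lt_min => /andP [rd rh].
have [Dpos Dinv] : 0 < D r /\ (D r)^-1 <= (`|C1| + 1)^-1 * r.
  by apply: hd; rewrite r0 rd.
have e1 : `|C1| * (`|C1| + 1)^-1 <= 1 by rewrite ler_pdivrMr // mul1r lerDl.
have e1' : (`|C1| + 1)^-1 <= 1 by rewrite invf_le1 // lerDr.
have rD1 : 1 <= r * D r.
  rewrite -ler_pdivrMr // div1r; apply: (le_trans Dinv).
  by rewrite -[X in _ <= X]mul1r ler_wpM2r // ltW.
have C1D : C1 / D r <= r.
  apply: (le_trans (y := `|C1| / D r)).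
    by rewrite ler_wpM2r ?invr_ge0 ?(ltW Dpos) ?ler_norm.
  apply: (le_trans (ler_wpM2l (normr_ge0 C1) Dinv)).
  by rewrite mulrA -[X in _ <= X]mul1r ler_wpM2r // ltW.
have [hap1 hap2] := use_approx hap r0 rD1 C1D rh.
have [ham1 ham2] := use_approx ham r0 rD1 C1D rh.
have c00' := c00.
split; apply: (count_bound p1 onb r0 c00 L0 N0) => //; exact: ltW.
Qed.
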